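(* Let $X$ be a proper geodesic metric space, $Y$ a compact metric space, and $f:X\to Y$ a continuous map. Then $f$ extends to a continuous map $\bar f:h_0X\to Y$ if and only if $f$ is uniformly continuous.
   Context: The $C_0$ coarse structure on a metric space $(X,d)$ consists of all sets $E\subset X\times X$ such that for every $\epsilon>0$ there is a compact $K\subset X$ with $d(x,y)<\epsilon$ for all $(x,y)\in E\setminus(K\times K)$ (controlled sets). A bounded continuous $f:X\to\mathbb{C}$ is a Higson function if for every controlled set $E$ the function $(x,y)\mapsto f(x)-f(y)$ restricted to $E$ vanishes at infinity; $C_{h_0}(X)$ denotes the algebra of bounded continuous Higson functions. The $C_0$ Higson compactification $h_0X$ is the compactification of $X$ with $C(h_0X)=C_{h_0}(X)$ (i.e., exactly the bounded continuous functions on $X$ lying in $C_{h_0}(X)$ extend continuously to $h_0X$); $\nu_0X=h_0X\setminus X$ is the $C_0$ Higson corona. Uniformly continuous: there is a monotone $\omega$ with $\omega(t)\to0$ as $t\to0$ and $d(f(x),f(x'))\le\omega(d(x,x'))$. *)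

(* Defs.v *)
From Stdlib Require Import Reals List.
Open Scope R_scope.

Record MetricSpace := {
  mcarrier :> Type;
  mdist : mcarrier -> mcarrier -> R;
  mdist_nonneg : forall x y, 0 <= mdist x y;
  mdist_eq0 : forall x y, mdist x y = 0 <-> x = y;
  mdist_sym : forall x y, mdist x y = mdist y x;
  mdist_tri : forall x y z, mdist x z <= mdist x y + mdist y z
}.
Arguments mdist {m} _ _.

Record TopSpace := {
  tcarrier :> Type;
  topen : (tcarrier -> Prop) -> Prop;
  topen_full : topen (fun _ => True);
  topen_inter : forall U V, topen U -> topen V -> topen (fun x => U x /\ V x);
  topen_union : forall F : (tcarrier -> Prop) -> Prop,
      (forall U, F U -> topen U) -> topen (fun x => exists U, F U /\ U x)
}.
Arguments topen {t} _.

Definition metric_open (M : MetricSpace) (U : M -> Prop) : Prop :=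
  forall x, U x -> exists r, 0 < r /\ forall y, mdist x y < r -> U y.

Lemma metric_open_full (M : MetricSpace) : metric_open M (fun _ => True).
Proof. intros x _; exists 1; split; [apply Rlt_0_1| auto]. Qed.

Lemma metric_open_inter (M : MetricSpace) U V :
  metric_open M U -> metric_open M V -> metric_open M (fun x => U x /\ V x).
Proof.
  intros HU HV x [Ux Vx].
  destruct (HU x Ux) as [r1 [Hr1 H1]]. destruct (HV x Vx) as [r2 [Hr2 H2]].
  exists (Rmin r1 r2); split.
  - apply Rmin_glb_lt; auto.
  - intros y Hy; split.
    + apply H1; eapply Rlt_le_trans; [exact Hy| apply Rmin_l].
    + apply H2; eapply Rlt_le_trans; [exact Hy| apply Rmin_r].
Qed.

Lemma metric_open_union (M : MetricSpace) (F : (M -> Prop) -> Prop) :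
  (forall U, F U -> metric_open M U) ->
  metric_open M (fun x => exists U, F U /\ U x).
Proof.
  intros HF x [U [FU Ux]].
  destruct (HF U FU x Ux) as [r [Hr H]].
  exists r; split; auto. intros y Hy; exists U; auto.
Qed.

Definition metric_top (M : MetricSpace) : TopSpace :=
  {| tcarrier := M; topen := metric_open M;
     topen_full := metric_open_full M;
     topen_inter := metric_open_inter M;
     topen_union := metric_open_union M |}.

Definition compact_in (T : TopSpace) (K : T -> Prop) : Prop :=
  forall F : (T -> Prop) -> Prop,
    (forall U, F U -> topen U) ->
    (forall x, K x -> exists U, F U /\ U x) ->
    exists l : list (T -> Prop),
      (forall U, In U l -> F U) /\
      (forall x, K x -> exists U, In U l /\ U x).

Definition compact_space (T : TopSpace) : Prop := compact_in T (fun _ => True).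

Definition hausdorff (T : TopSpace) : Prop :=
  forall x y : T, x <> y ->
    exists U V, topen U /\ topen V /\ U x /\ V y /\ forall z, ~ (U z /\ V z).

Definition continuous (S T : TopSpace) (f : S -> T) : Prop :=
  forall V : T -> Prop, topen V -> topen (fun x => V (f x)).

Definition is_compactification (X K : TopSpace) (i : X -> K) : Prop :=
  compact_space K /\ hausdorff K /\
  continuous X K i /\
  (forall x y, i x = i y -> x = y) /\
  (forall U : X -> Prop, topen U ->
      exists V : K -> Prop, topen V /\ forall x, U x <-> V (i x)) /\
  (forall V : K -> Prop, topen V -> (exists k, V k) -> exists x, V (i x)).

Definition Cplx := (R * R)%type.
Definition cdist (z w : Cplx) : R :=
  sqrt ((fst z - fst w) ^ 2 + (snd z - snd w) ^ 2).
Definition cnorm (z : Cplx) : R := sqrt (fst z ^ 2 + snd z ^ 2).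

Definition Copen (U : Cplx -> Prop) : Prop :=
  forall z, U z -> exists r, 0 < r /\ forall w, cdist z w < r -> U w.
Definition continuous_C (T : TopSpace) (g : T -> Cplx) : Prop :=
  forall U, Copen U -> topen (fun x => U (g x)).

Definition C0_controlled (X : MetricSpace) (E : X -> X -> Prop) : Prop :=
  forall eps, 0 < eps ->
    exists K : X -> Prop, compact_in (metric_top X) K /\
      forall x y, E x y -> ~ (K x /\ K y) -> mdist x y < eps.

Definition vanishes_at_infinity_on (X : MetricSpace) (E : X -> X -> Prop)
  (h : X -> X -> R) : Prop :=
  forall eps, 0 < eps ->
    exists K : X -> Prop, compact_in (metric_top X) K /\
      forall x y, E x y -> ~ (K x /\ K y) -> h x y < eps.

Definition C_bounded (X : Type) (g : X -> Cplx) : Prop :=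
  exists B, forall x, cnorm (g x) <= B.

Definition C_h0 (X : MetricSpace) (g : X -> Cplx) : Prop :=
  C_bounded X g /\ continuous_C (metric_top X) g /\
  forall E, C0_controlled X E ->
    vanishes_at_infinity_on X E (fun x y => cdist (g x) (g y)).

(* (K, i) is the C_0 Higson compactification h_0X: a compactification
   such that the bounded continuous functions on X extending continuously
   to K are exactly those of C_{h_0}(X). *)
Definition is_h0_compactification (X : MetricSpace) (K : TopSpace)
  (i : X -> K) : Prop :=
  is_compactification (metric_top X) K i /\
  forall g : X -> Cplx, C_bounded X g -> continuous_C (metric_top X) g ->
    (C_h0 X g <-> exists G : K -> Cplx, continuous_C K G /\
                                         forall x, G (i x) = g x).

Definition proper_metric (X : MetricSpace) : Prop :=
  forall (x : X) r, compact_in (metric_top X) (fun y => mdist x y <= r).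

Definition geodesic (X : MetricSpace) : Prop :=
  forall x y : X, exists gam : R -> X,
    gam 0 = x /\ gam (mdist x y) = y /\
    forall s t, 0 <= s <= mdist x y -> 0 <= t <= mdist x y ->
      mdist (gam s) (gam t) = Rabs (s - t).

Definition uniformly_continuous (X Y : MetricSpace) (f : X -> Y) : Prop :=
  exists omega : R -> R,
    (forall s t, 0 <= s -> s <= t -> omega s <= omega t) /\
    (forall eps, 0 < eps -> exists delta, 0 < delta /\
        forall t, 0 < t < delta -> Rabs (omega t) < eps) /\
    forall x x', mdist (f x) (f x') <= omega (mdist x x').

(* Main.v *)
Require Import Defs.
From Stdlib Require Import Reals Lra Lia List Classical ClassicalEpsilon FunctionalExtensionality PropExtensionality.
Open Scope R_scope.

Lemma list_ex_min {A} (l : list A) (P : A -> R -> Prop) :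
  (forall a d d', P a d -> 0 < d' <= d -> P a d') ->
  (forall a, In a l -> exists d, 0 < d /\ P a d) ->
  exists d, 0 < d /\ forall a, In a l -> P a d.
Proof.
  intros Hm; induction l as [|a l IH]; intros H.
  - exists 1; split; [lra| intros a []].
  - destruct (H a (or_introl eq_refl)) as [d1 [Hd1 P1]].
    destruct IH as [d2 [Hd2 P2]]. { intros b Hb; apply H; right; auto. }
    exists (Rmin d1 d2); split. { apply Rmin_glb_lt; auto. }
    intros b [<-|Hb].
    + apply Hm with d1; auto. split; [apply Rmin_glb_lt; auto| apply Rmin_l].
    + apply Hm with d2; auto. split; [apply Rmin_glb_lt; auto| apply Rmin_r].
Qed.

Lemma list_ex_max {A} (l : list A) (P : A -> R -> Prop) :
  (forall a d d', P a d -> d <= d' -> P a d') ->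
  (forall a, In a l -> exists d, P a d) ->
  exists d, forall a, In a l -> P a d.
Proof.
  intros Hm; induction l as [|a l IH]; intros H.
  - exists 0; intros a [].
  - destruct (H a (or_introl eq_refl)) as [d1 P1].
    destruct IH as [d2 P2]. { intros b Hb; apply H; right; auto. }
    exists (Rmax d1 d2).
    intros b [<-|Hb].
    + apply Hm with d1; auto. apply Rmax_l.
    + apply Hm with d2; auto. apply Rmax_r.
Qed.

Lemma list_choose {A B} (l : list A) (P : A -> B -> Prop) :
  (forall a, In a l -> exists b, P a b) ->
  exists lb, forall a, In a l -> exists b, In b lb /\ P a b.
Proof.
  induction l as [|a l IH]; intros H.
  - exists nil; intros a [].
  - destruct (H a (or_introl eq_refl)) as [b Pb].
    destruct IH as [lb Hl]. { intros c Hc; apply H; right; auto. }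
    exists (b :: lb). intros c [<-|Hc].
    + exists b; split; [left|]; auto.
    + destruct (Hl c Hc) as [b' [Hb' Pb']]; exists b'; split; [right|]; auto.
Qed.

Lemma topen_ext (T : TopSpace) (P Q : T -> Prop) :
  (forall x, P x <-> Q x) -> topen P -> topen Q.
Proof.
  intros H HP. assert (E : P = Q).
  { extensionality x; apply propositional_extensionality; auto. }
  subst; auto.
Qed.

Lemma topen_list_inter (T : TopSpace) {A} (l : list A) (W : A -> T -> Prop) :
  (forall a, topen (W a)) -> topen (fun k => forall a, In a l -> W a k).
Proof.
  intros HW; induction l as [|a l IH].
  - apply topen_ext with (fun _ => True); [|apply topen_full].
    intros x; split; auto. intros _ a [].
  - apply topen_ext with (fun k => W a k /\ (forall b, In b l -> W b k)).
    + intros x; split.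
      * intros [H1 H2] b [<-|Hb]; auto.
      * intros H; split; [apply H; left; auto| intros b Hb; apply H; right; auto].
    + apply topen_inter; auto.
Qed.

Lemma ball_open (M : MetricSpace) (x : M) r : metric_open M (fun z => mdist x z < r).
Proof.
  intros y Hy. exists (r - mdist x y); split; [lra|].
  intros z Hz. pose proof (mdist_tri M x y z). lra.
Qed.

Lemma dist_diff (M : MetricSpace) (y w w' : M) :
  Rabs (mdist y w - mdist y w') <= mdist w w'.
Proof.
  apply Rabs_le. pose proof (mdist_tri M y w w'). pose proof (mdist_tri M y w' w).
  rewrite (mdist_sym M w' w) in H0. lra.
Qed.

Lemma cdist_real a b : cdist (a, 0) (b, 0) = Rabs (a - b).
Proof.
  unfold cdist; simpl. rewrite <- sqrt_Rsqr_abs. f_equal. unfold Rsqr; ring.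
Qed.

Lemma cnorm_real a : cnorm (a, 0) = Rabs a.
Proof.
  unfold cnorm; simpl. rewrite <- sqrt_Rsqr_abs. f_equal. unfold Rsqr; ring.
Qed.

Lemma cdist_fst z w : Rabs (fst z - fst w) <= cdist z w.
Proof.
  unfold cdist. rewrite <- sqrt_Rsqr_abs. apply sqrt_le_1_alt.
  unfold Rsqr. simpl. pose proof (pow2_ge_0 (snd z - snd w)). nra.
Qed.

Lemma Copen_fst (P : R -> Prop) :
  (forall a, P a -> exists r, 0 < r /\ forall b, Rabs (b - a) < r -> P b) ->
  Copen (fun z => P (fst z)).
Proof.
  intros H z Hz. destruct (H _ Hz) as [r [Hr Hb]]. exists r; split; auto.
  intros w Hw. apply Hb. rewrite Rabs_minus_sym.
  eapply Rle_lt_trans; [apply cdist_fst| exact Hw].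
Qed.

Lemma cont_at (X Y : MetricSpace) (f : X -> Y) :
  continuous (metric_top X) (metric_top Y) f ->
  forall x eps, 0 < eps -> exists s, 0 < s /\ forall x', mdist x x' < s -> mdist (f x) (f x') < eps.
Proof.
  intros Hf x eps He.
  pose proof (Hf (fun w => mdist (f x) w < eps) (ball_open Y (f x) eps)) as H.
  simpl in H. destruct (H x) as [s [Hs Hs']].
  - rewrite (proj2 (mdist_eq0 Y (f x) (f x)) eq_refl); auto.
  - exists s; split; auto.
Qed.

Lemma cont_dist (T : TopSpace) (Y : MetricSpace) (F : T -> Y) (y : Y) :
  continuous T (metric_top Y) F -> continuous_C T (fun t => (mdist y (F t), 0)).
Proof.
  intros HF U HU. apply (HF (fun w => U (mdist y w, 0))).
  simpl. intros w Uw. destruct (HU _ Uw) as [r [Hr H]]. exists r; split; auto.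
  intros w' Hw'. apply H. rewrite cdist_real.
  eapply Rle_lt_trans; [apply dist_diff| exact Hw'].
Qed.

Lemma net (Y : MetricSpace) : compact_space (metric_top Y) ->
  forall r, 0 < r -> exists ys : list Y, forall z, exists y, In y ys /\ mdist y z < r.
Proof.
  intros HY r Hr.
  destruct (HY (fun U => exists y, U = fun z => mdist y z < r)) as [l [Hl1 Hl2]].
  - intros U [y ->]. apply ball_open.
  - intros z _. exists (fun w => mdist z w < r). split; [exists z; auto|].
    rewrite (proj2 (mdist_eq0 Y z z) eq_refl); auto.
  - destruct (list_choose l (fun U y => U = fun z => mdist y z < r)) as [ys Hys].
    { intros U HU; apply Hl1; auto. }
    exists ys. intros z. destruct (Hl2 z I) as [U [HU Uz]].
    destruct (Hys U HU) as [y [Hy ->]]. exists y; auto.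
Qed.

Lemma bounded_Y (Y : MetricSpace) : compact_space (metric_top Y) ->
  forall y : Y, exists B, forall z, mdist y z <= B.
Proof.
  intros HY y. destruct (net Y HY 1 Rlt_0_1) as [ys Hys].
  destruct (list_ex_max ys (fun y' B => mdist y y' + 1 <= B)) as [B HB].
  - intros; lra.
  - intros a _; exists (mdist y a + 1); lra.
  - exists B. intros z. destruct (Hys z) as [y' [Hy' Hd]].
    pose proof (HB y' Hy'). pose proof (mdist_tri Y y y' z). lra.
Qed.

Lemma diam_Y (Y : MetricSpace) : compact_space (metric_top Y) ->
  exists D, 0 <= D /\ forall y y' : Y, mdist y y' <= D.
Proof.
  intros HY. destruct (classic (exists y0 : Y, True)) as [[y0 _]|Hn].
  - destruct (bounded_Y Y HY y0) as [B HB]. exists (2 * B).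
    pose proof (HB y0). pose proof (mdist_nonneg Y y0 y0). split; [lra|].
    intros y y'. pose proof (mdist_tri Y y y0 y'). rewrite (mdist_sym Y y y0) in H1.
    pose proof (HB y); pose proof (HB y'); lra.
  - exists 0; split; [lra|]. intros y; exfalso; apply Hn; exists y; auto.
Qed.

Lemma heine_cantor (X Y : MetricSpace) (f : X -> Y) :
  continuous (metric_top X) (metric_top Y) f ->
  forall K', compact_in (metric_top X) K' -> forall eps, 0 < eps ->
  exists d, 0 < d /\ forall u v, K' u -> K' v -> mdist u v < d -> mdist (f u) (f v) < eps.
Proof.
  intros Hf K' HK eps He.
  destruct (HK (fun U => exists x r, 0 < r /\ U = (fun z => mdist x z < r) /\
                  forall z, mdist x z < 2 * r -> mdist (f x) (f z) < eps / 2))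
    as [l [Hl1 Hl2]].
  - intros U [x [r [_ [-> _]]]]. apply ball_open.
  - intros x _. destruct (cont_at X Y f Hf x (eps/2)) as [s [Hs Hs']]; [lra|].
    exists (fun z => mdist x z < s / 2). split.
    + exists x, (s/2). repeat split; [lra|]. intros z Hz; apply Hs'; lra.
    + simpl. rewrite (proj2 (mdist_eq0 X x x) eq_refl); lra.
  - destruct (list_ex_min l (fun U d => exists x r, U = (fun z => mdist x z < r) /\ d <= r /\
                  forall z, mdist x z < 2 * r -> mdist (f x) (f z) < eps / 2)) as [d [Hd HP]].
    + intros U d d' [x [r [H1 [H2 H3]]]] Hd'. exists x, r; repeat split; auto; lra.
    + intros U HU. destruct (Hl1 U HU) as [x [r [Hr [H1 H2]]]].
      exists r; split; auto. exists x, r; repeat split; auto; lra.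
    + exists d; split; auto. intros u v Ku Kv Huv.
      destruct (Hl2 u Ku) as [U [HU Uu]]. destruct (HP U HU) as [x [r [-> [Hdr H3]]]].
      simpl in Uu. pose proof (mdist_tri X x u v).
      pose proof (H3 u ltac:(lra)) as A1. pose proof (H3 v ltac:(lra)) as A2.
      pose proof (mdist_tri Y (f u) (f x) (f v)) as A3. rewrite (mdist_sym Y (f u) (f x)) in A3. lra.
Qed.

Lemma finite_compact (T : TopSpace) (a b : nat -> T) (N : nat) :
  compact_in T (fun z => exists n, (n < N)%nat /\ (z = a n \/ z = b n)).
Proof.
  intros F HF. induction N as [|N IH]; intros Hc.
  - exists nil; split; [intros U []|]. intros x [n [Hn _]]; lia.
  - destruct IH as [l [Hl1 Hl2]].
    { intros x [n [Hn Hx]]; apply Hc; exists n; split; auto. }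
    destruct (Hc (a N)) as [Ua [FUa Ua']]. { exists N; split; auto. }
    destruct (Hc (b N)) as [Ub [FUb Ub']]. { exists N; split; auto. }
    exists (Ua :: Ub :: l). split.
    + intros U [<-|[<-|HU]]; auto.
    + intros x [n [Hn Hx]]. destruct (Nat.eq_dec n N) as [->|Hne].
      * destruct Hx as [->| ->]; [exists Ua | exists Ub]; simpl; auto.
      * destruct (Hl2 x) as [U [HU Ux]]. { exists n; split; auto; lia. }
        exists U; simpl; auto.
Qed.

Lemma omega_exists (X Y : MetricSpace) (f : X -> Y) (D : R) :
  0 <= D -> (forall y y' : Y, mdist y y' <= D) ->
  (forall eps, 0 < eps -> exists d, 0 < d /\ forall x x', mdist x x' < d -> mdist (f x) (f x') <= eps) ->
  uniformly_continuous X Y f.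
Proof.
  intros HD0 HD Heps.
  set (E := fun t r => r = 0 \/ exists x x', mdist x x' <= t /\ r = mdist (f x) (f x')).
  assert (Hb : forall t, bound (E t)).
  { intros t; exists D. intros r [->|[x [x' [_ ->]]]]; auto. }
  assert (He : forall t, exists r, E t r). { intros t; exists 0; left; auto. }
  exists (fun t => proj1_sig (completeness (E t) (Hb t) (He t))).
  split; [|split].
  - intros s t Hs Hst.
    destruct (completeness (E s) (Hb s) (He s)) as [ms [Us Ls]].
    destruct (completeness (E t) (Hb t) (He t)) as [mt [Ut Lt]]. simpl.
    apply Ls. intros r Hr. apply Ut. destruct Hr as [->|[x [x' [H1 H2]]]]; [left; auto|].
    right; exists x, x'; split; auto; lra.
  - intros eps Heps0. destruct (Heps (eps/2)) as [d [Hd Hd']]; [lra|].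
    exists d; split; auto. intros t Ht.
    destruct (completeness (E t) (Hb t) (He t)) as [m [U L]]. simpl.
    assert (m0 : 0 <= m) by (apply U; left; auto).
    assert (m1 : m <= eps / 2).
    { apply L. intros r [->|[x [x' [H1 ->]]]]; [lra|]. apply Hd'; lra. }
    rewrite Rabs_pos_eq; lra.
  - intros x x'. destruct (completeness (E (mdist x x')) (Hb _) (He _)) as [m [U L]]. simpl.
    apply U. right. exists x, x'; split; [lra|auto].
Qed.

Lemma forward (X Y : MetricSpace) (f : X -> Y)
  (HYcpt : compact_space (metric_top Y))
  (Hfcont : continuous (metric_top X) (metric_top Y) f)
  (K : TopSpace) (i : X -> K) (Hh0 : is_h0_compactification X K i) :
  (exists F : K -> Y, continuous K (metric_top Y) F /\ forall x, F (i x) = f x) ->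
  uniformly_continuous X Y f.
Proof.
  intros [F [HF HFi]]. destruct (diam_Y Y HYcpt) as [D [HD0 HD]].
  apply omega_exists with D; auto.
  intros eps Heps. apply NNPP. intros Hn.
  assert (Hs : forall n : nat, exists p : X * X, mdist (fst p) (snd p) < / (INR n + 1) /\
                   eps < mdist (f (fst p)) (f (snd p))).
  { intros n. apply NNPP; intros Hn2. apply Hn. exists (/ (INR n + 1)).
    split. { apply Rinv_0_lt_compat. pose proof (pos_INR n); lra. }
    intros x x' Hxx'. apply Rnot_lt_le. intros Hlt. apply Hn2. exists (x, x'); simpl; auto. }
  set (p := fun n => proj1_sig (constructive_indefinite_description _ (Hs n))).
  assert (Hp : forall n, mdist (fst (p n)) (snd (p n)) < / (INR n + 1) /\
                   eps < mdist (f (fst (p n))) (f (snd (p n)))).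
  { intros n; exact (proj2_sig (constructive_indefinite_description _ (Hs n))). }
  set (a := fun n => fst (p n)). set (b := fun n => snd (p n)).
  set (E := fun u v => exists n, u = a n /\ v = b n).
  assert (HE : C0_controlled X E).
  { intros eta Heta. destruct (archimed_cor1 eta Heta) as [N [HN HN0]].
    exists (fun z => exists n, (n < N)%nat /\ (z = a n \/ z = b n)).
    split; [apply finite_compact|].
    intros u v [n [-> ->]] Hnk. destruct (Compare_dec.le_lt_dec N n) as [Hle|Hlt].
    - destruct (Hp n) as [H1 _]. unfold a, b. eapply Rlt_trans; [exact H1|].
      eapply Rle_lt_trans; [|exact HN].
      apply Rinv_le_contravar. { apply lt_0_INR; auto. }
      apply le_INR in Hle. lra.
    - exfalso; apply Hnk; split; exists n; auto. }
  destruct Hh0 as [_ Hchar].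
  set (g := fun y x => (mdist y (f x), 0)).
  assert (Hg : forall y, C_h0 X (g y)).
  { intros y. destruct (bounded_Y Y HYcpt y) as [B HB].
    assert (Hbd : C_bounded X (g y)).
    { exists B; intros x; unfold g; rewrite cnorm_real, Rabs_pos_eq; auto. apply mdist_nonneg. }
    assert (Hc : continuous_C (metric_top X) (g y)) by (apply cont_dist; auto).
    apply (proj2 (Hchar (g y) Hbd Hc)).
    exists (fun k => (mdist y (F k), 0)). split; [apply cont_dist; auto|].
    intros x; unfold g; rewrite HFi; auto. }
  destruct (net Y HYcpt (eps/4) ltac:(lra)) as [ys Hys].
  destruct (list_ex_min ys (fun y d => exists K', 
      (forall u v, E u v -> ~ (K' u /\ K' v) -> cdist (g y u) (g y v) < eps / 2) /\
      (forall u v, K' u -> K' v -> mdist u v < d -> mdist (f u) (f v) < eps))) as [d [Hd HP]].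
  - intros y d d' [K' [H1 H2]] Hd'. exists K'; split; auto. intros u v Ku Kv Huv; apply H2; auto; lra.
  - intros y _. destruct (Hg y) as [_ [_ Hh]].
    destruct (Hh E HE (eps/2)) as [K' [HK' HK'']]; [lra|].
    destruct (heine_cantor X Y f Hfcont K' HK' eps Heps) as [d [Hd Hd']].
    exists d; split; auto. exists K'; split; auto.
  - destruct (archimed_cor1 d Hd) as [N [HN HN0]].
    destruct (Hp N) as [H1 H2]. fold (a N) (b N) in H1, H2.
    destruct (Hys (f (a N))) as [y [Hy Hyd]].
    destruct (HP y Hy) as [K' [HK1 HK2]].
    assert (Hab : mdist (a N) (b N) < d).
    { eapply Rlt_trans; [exact H1|]. eapply Rle_lt_trans; [|exact HN].
      apply Rinv_le_contravar. { apply lt_0_INR; auto. } lra. }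
    destruct (classic (K' (a N) /\ K' (b N))) as [[Ka Kb]|Hnk].
    + pose proof (HK2 _ _ Ka Kb Hab); lra.
    + pose proof (HK1 (a N) (b N) ltac:(exists N; auto) Hnk) as Hc.
      unfold g in Hc. rewrite cdist_real in Hc. apply Rabs_def2 in Hc.
      pose proof (mdist_tri Y (f (a N)) y (f (b N))). rewrite (mdist_sym Y (f (a N)) y) in H. lra.
Qed.

Lemma ext_closed (X : Type) (K : TopSpace) (i : X -> K)
  (Hdense : forall V : K -> Prop, topen V -> (exists k, V k) -> exists x, V (i x))
  (A B : K -> Cplx) (Q : R -> R -> Prop) :
  continuous_C K A -> continuous_C K B ->
  (forall a b, ~ Q a b -> exists r, 0 < r /\ forall a' b', Rabs (a' - a) < r -> Rabs (b' - b) < r -> ~ Q a' b') ->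
  (forall x, Q (fst (A (i x))) (fst (B (i x)))) -> forall k, Q (fst (A k)) (fst (B k)).
Proof.
  intros HA HB HQ Hx k. apply NNPP; intros Hn.
  destruct (HQ _ _ Hn) as [r [Hr Hr']].
  assert (Ho : forall c, Copen (fun z => Rabs (fst z - c) < r)).
  { intros c. apply (Copen_fst (fun a => Rabs (a - c) < r)).
    intros a Ha. exists (r - Rabs (a - c)); split; [lra|].
    intros b' Hb'. pose proof (Rabs_triang (b' - a) (a - c)).
    replace (b' - a + (a - c)) with (b' - c) in H by ring. lra. }
  destruct (Hdense (fun k' => Rabs (fst (A k') - fst (A k)) < r /\ Rabs (fst (B k') - fst (B k)) < r))
    as [x [H1 H2]].
  - apply topen_inter; [apply (HA _ (Ho _)) | apply (HB _ (Ho _))].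
  - exists k. unfold Rminus; rewrite !Rplus_opp_r, Rabs_R0; auto.
  - apply (Hr' _ _ H1 H2); auto.
Qed.

Lemma backward (X Y : MetricSpace) (f : X -> Y)
  (HYcpt : compact_space (metric_top Y))
  (Hfcont : continuous (metric_top X) (metric_top Y) f)
  (K : TopSpace) (i : X -> K) (Hh0 : is_h0_compactification X K i) :
  uniformly_continuous X Y f ->
  (exists F : K -> Y, continuous K (metric_top Y) F /\ forall x, F (i x) = f x).
Proof.
  intros [om [Hom1 [Hom2 Hom3]]].
  destruct Hh0 as [[_ [_ [_ [_ [_ Hdense]]]]] Hchar].
  set (g := fun y x => (mdist y (f x), 0)).
  assert (Hg : forall y, exists G : K -> Cplx, continuous_C K G /\ forall x, G (i x) = g y x).
  { intros y. destruct (bounded_Y Y HYcpt y) as [B HB].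
    assert (Hbd : C_bounded X (g y)).
    { exists B; intros x; unfold g; rewrite cnorm_real, Rabs_pos_eq; auto. apply mdist_nonneg. }
    assert (Hc : continuous_C (metric_top X) (g y)) by (apply cont_dist; auto).
    apply (proj1 (Hchar (g y) Hbd Hc)). split; [|split]; auto.
    intros E HE eps Heps. destruct (Hom2 eps Heps) as [d [Hd Hd']].
    destruct (HE d Hd) as [K0 [HK0 HK0']]. exists K0; split; auto.
    intros x x' Exx' Hn. unfold g. rewrite cdist_real.
    pose proof (HK0' x x' Exx' Hn) as Hlt.
    destruct (Req_dec (mdist x x') 0) as [Heq|Hne].
    - apply mdist_eq0 in Heq; subst. unfold Rminus; rewrite Rplus_opp_r, Rabs_R0; auto.
    - pose proof (mdist_nonneg X x x').
      eapply Rle_lt_trans; [apply dist_diff|]. eapply Rle_lt_trans; [apply Hom3|].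
      eapply Rle_lt_trans; [apply Rle_abs| apply Hd'; lra]. }
  set (G := fun y => proj1_sig (constructive_indefinite_description _ (Hg y))).
  assert (HGc : forall y, continuous_C K (G y)).
  { intros y; exact (proj1 (proj2_sig (constructive_indefinite_description _ (Hg y)))). }
  assert (HGi : forall y x, G y (i x) = (mdist y (f x), 0)).
  { intros y; exact (proj2 (proj2_sig (constructive_indefinite_description _ (Hg y)))). }
  set (h := fun k y => fst (G y k)).
  assert (P1 : forall k y, 0 <= h k y).
  { intros k y. apply (ext_closed X K i Hdense (G y) (G y) (fun a _ => 0 <= a)); auto.
    - intros a b Hn. exists (- a); split; [lra|]. intros a' b' Ha _. apply Rabs_def2 in Ha. lra.
    - intros x; rewrite HGi; apply mdist_nonneg. }
  assert (P2 : forall k y y', h k y <= h k y' + mdist y y').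
  { intros k y y'. apply (ext_closed X K i Hdense (G y) (G y') (fun a b => a <= b + mdist y y')); auto.
    - intros a b Hn. exists ((a - b - mdist y y') / 2); split; [lra|].
      intros a' b' Ha Hb. apply Rabs_def2 in Ha. apply Rabs_def2 in Hb. lra.
    - intros x; rewrite !HGi; simpl. pose proof (mdist_tri Y y y' (f x)). lra. }
  assert (P3 : forall k y y', mdist y y' <= h k y + h k y').
  { intros k y y'. apply (ext_closed X K i Hdense (G y) (G y') (fun a b => mdist y y' <= a + b)); auto.
    - intros a b Hn. exists ((mdist y y' - a - b) / 2); split; [lra|].
      intros a' b' Ha Hb. apply Rabs_def2 in Ha. apply Rabs_def2 in Hb. lra.
    - intros x; rewrite !HGi; simpl. pose proof (mdist_tri Y y (f x) y').
      rewrite (mdist_sym Y (f x) y') in H. lra. }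
  assert (P4 : forall k eps, 0 < eps -> exists y, h k y < eps).
  { intros k eps Heps. apply NNPP; intros Hn.
    destruct (net Y HYcpt (eps/2) ltac:(lra)) as [ys Hys].
    destruct (Hdense (fun k' => forall y, In y ys -> eps / 2 < fst (G y k'))) as [x Hx].
    - apply (topen_list_inter K ys (fun y k' => eps / 2 < fst (G y k'))).
      intros y. apply (HGc y (fun z => eps / 2 < fst z)).
      apply (Copen_fst (fun a => eps / 2 < a)). intros a Ha. exists (a - eps/2); split; [lra|].
      intros b Hb. apply Rabs_def2 in Hb. lra.
    - exists k. intros y _.
      assert (~ h k y < eps) by (intros H; apply Hn; exists y; auto). unfold h in H; lra.
    - destruct (Hys (f x)) as [y [Hy Hyd]]. pose proof (Hx y Hy) as Hc.
      rewrite HGi in Hc; simpl in Hc. lra. }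
  assert (P5 : forall k, exists y0, h k y0 = 0).
  { intros k. apply NNPP; intros Hn.
    assert (Hpos : forall y, 0 < h k y).
    { intros y. destruct (P1 k y) as [H|H]; auto. exfalso; apply Hn; exists y; auto. }
    destruct (HYcpt (fun U => exists y, U = fun z => mdist y z < h k y / 2)) as [l [Hl1 Hl2]].
    - intros U [y ->]. apply ball_open.
    - intros z _. exists (fun w => mdist z w < h k z / 2). split; [exists z; auto|].
      simpl. rewrite (proj2 (mdist_eq0 Y z z) eq_refl). pose proof (Hpos z); lra.
    - destruct (list_ex_min l (fun U m => exists y, U = (fun z => mdist y z < h k y / 2) /\ m <= h k y / 2))
        as [m [Hm HP]].
      + intros U m m' [y [H1 H2]] Hm'. exists y; split; auto; lra.
      + intros U HU. destruct (Hl1 U HU) as [y ->]. exists (h k y / 2).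
        split; [pose proof (Hpos y); lra|]. exists y; split; auto; lra.
      + destruct (P4 k m Hm) as [y Hy].
        destruct (Hl2 y I) as [U [HU Uy]]. destruct (HP U HU) as [y1 [-> Hm1]].
        simpl in Uy. pose proof (P2 k y1 y). lra. }
  set (F := fun k => proj1_sig (constructive_indefinite_description _ (P5 k))).
  assert (HF0 : forall k, h k (F k) = 0).
  { intros k; exact (proj2_sig (constructive_indefinite_description _ (P5 k))). }
  assert (Hhd : forall k y, h k y = mdist y (F k)).
  { intros k y. pose proof (P2 k y (F k)). pose proof (P3 k y (F k)). rewrite HF0 in *. lra. }
  exists F. split.
  - intros V HV. simpl in HV.
    apply topen_ext with (fun k => exists W, (topen W /\ forall k', W k' -> V (F k')) /\ W k).
    + intros k; split.
      * intros [W [[_ HW] Wk]]; auto.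
      * intros Vk. destruct (HV _ Vk) as [r [Hr Hr']].
        exists (fun k' => fst (G (F k) k') < r). split; [split|].
        -- apply (HGc (F k) (fun z => fst z < r)).
           apply (Copen_fst (fun a => a < r)). intros a Ha. exists (r - a); split; [lra|].
           intros b Hb. apply Rabs_def2 in Hb. lra.
        -- intros k' Hk'. apply Hr'. fold (h k' (F k)) in Hk'. rewrite Hhd in Hk'.
           exact Hk'.
        -- simpl. fold (h k (F k)). rewrite HF0; auto.
    + apply topen_union. intros U [HU _]; auto.
  - intros x. pose proof (Hhd (i x) (f x)) as H. unfold h in H. rewrite HGi in H. simpl in H.
    rewrite (proj2 (mdist_eq0 Y (f x) (f x)) eq_refl) in H.
    symmetry in H. apply mdist_eq0 in H. auto.
Qed.

Theorem corollary3p5 (X Y : MetricSpace) (f : X -> Y)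
  (HXproper : proper_metric X) (HXgeod : geodesic X)
  (HYcpt : compact_space (metric_top Y))
  (Hfcont : continuous (metric_top X) (metric_top Y) f)
  (K : TopSpace) (i : X -> K) (Hh0 : is_h0_compactification X K i) :
  (exists F : K -> Y, continuous K (metric_top Y) F /\ forall x, F (i x) = f x)
  <-> uniformly_continuous X Y f.
Proof.
  split.
  - apply forward; auto.
  - apply backward; auto.
Qed.
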